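(* Let $G$ be a finite group and let $x_1, \dots, x_n$ be representatives of the distinct rational classes of $G$. Then $$|\mathrm{Solv}(G)| \leq \sum_{i=1}^n [G : N_G(\langle x_i \rangle)].$$
   Context: For a finite group $G$ and $x \in G$, the solvabilizer of $x$ in $G$ is $\mathrm{Sol}_G(x) = \{y \in G : \langle x, y \rangle \text{ is solvable}\}$; $\mathrm{Solv}(G) = \{\mathrm{Sol}_G(x) : x \in G\}$ is the set of distinct solvabilizers. The rational class of $x \in G$ is the union of the conjugacy classes $(x^i)^G$ over all integers $i$ with $\gcd(|x|, i) = 1$. *)

(* Defs.v *)
From mathcomp Require Import all_boot all_fingroup all_solvable.
Set Implicit Arguments. Unset Strict Implicit. Unset Printing Implicit Defensive.
Local Open Scope group_scope.

Definition Sol (gT : finGroupType) (G : {set gT}) (x : gT) : {set gT} :=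
  [set y in G | solvable <<[set x; y]>>].

Definition Solv (gT : finGroupType) (G : {set gT}) : {set {set gT}} :=
  [set Sol G x | x in G].

(* Rational class of x in G: union of the classes (x^i)^G, gcd(#[x], i) = 1.
   Since x^i depends only on i mod #[x], it suffices to take 0 <= i < #[x]. *)
Definition ratclass (gT : finGroupType) (G : {set gT}) (x : gT) : {set gT} :=
  \bigcup_(i < #[x] | coprime #[x] i) ((x ^+ i) ^: G).

(* Main.v *)
Require Import Defs.
From mathcomp Require Import all_boot all_fingroup all_solvable.
Local Open Scope group_scope.
Set Implicit Arguments. Unset Strict Implicit.

Lemma gen2_join (gT : finGroupType) (y z : gT) :
  <<[set y; z]>> = <[y]> <*> <[z]>.
Proof.
apply/eqP; rewrite eqEsubset; apply/andP; split.
  rewrite gen_subG; apply/subsetP => u; rewrite !inE => /orP[]/eqP->.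
    by apply: mem_gen; rewrite inE cycle_id.
  by apply: mem_gen; rewrite inE cycle_id orbT.
rewrite join_subG !cycle_subG; apply/andP; split; apply: mem_gen; 
  by rewrite !inE eqxx ?orbT.
Qed.

Definition HH (gT : finGroupType) (G : {set gT}) (C : {set gT}) : {set gT} :=
  [set z in G | solvable (C <*> <[z]>)].

Lemma Sol_HH (gT : finGroupType) (G : {set gT}) y : Sol G y = HH G <[y]>.
Proof. by apply/setP => z; rewrite !inE gen2_join. Qed.

Lemma card_bigcup_seq (T : finType) (I : eqType) (xs : seq I) (F : I -> {set T}) :
  #|\bigcup_(x <- xs) F x| <= \sum_(x <- xs) #|F x|.
Proof.
elim: xs => [|a s IH]; first by rewrite !big_nil cards0.
rewrite !big_cons; apply: leq_trans (leq_card_setU _ _) _.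
by rewrite leq_add2l.
Qed.

Theorem corollary6p3 (gT : finGroupType) (G : {group gT}) (xs : seq gT) :
  {subset xs <= G} ->
  uniq [seq ratclass G x | x <- xs] ->
  (forall y, y \in G -> exists2 x, x \in xs & y \in ratclass G x) ->
  #|Solv G| <= \sum_(x <- xs) #|G : 'N_G(<[x]>)|.
Proof.
move=> sxsG _ cover.
have sub : Solv G \subset \bigcup_(x <- xs) (HH G @: orbit 'Js G <[x]>).
  apply/subsetP => S /imsetP[y yG ->].
  have [x xxs yr] := cover y yG; move: yr; rewrite /ratclass => H.
  have := @bigcupP gT _ y _ (fun i : 'I_#[x] => (x ^+ i) ^: G) H.
  case=> i cop /imsetP[g gG yE]; rewrite yE.
  have hx : <[x ^+ i]> = <[x]>.
    apply/eqP; rewrite eq_sym.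
    by rewrite -/(generator <[x]> (x ^+ i)) generator_coprime.
  rewrite bigcup_seq; apply/(@bigcupP _ gT); exists x => //.
  apply/imsetP; exists (<[x]> :^ g); last by rewrite Sol_HH cycleJ hx.
  by apply/imsetP; exists g.
apply: leq_trans (subset_leq_card sub) _.
apply: leq_trans (card_bigcup_seq _ _) _.
apply: leq_sum => x _.
apply: leq_trans (leq_imset_card _ _) _.
by rewrite card_orbit astab1Js.
Qed.
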